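(* Let $C_5$ be the $5$-cycle (pentagon) and $I(C_5)$ its edge ideal in a polynomial ring in five variables over a field. Then $I(C_5)^q$ has linear quotients for every $q\ge 2$.
   Context: The edge ideal of a graph is generated by the products $x_ix_j$ of variables corresponding to its edges $\{i,j\}$. A monomial ideal generated in a single degree has linear quotients if its minimal monomial generators can be ordered $u_1>\cdots>u_r$ so that each colon ideal $(u_1,\ldots,u_i):u_{i+1}$, $1\le i<r$, is generated by a subset of the variables. *)

(* Defs.v *)
From HB Require Import structures.
From mathcomp Require Import all_boot all_order all_algebra.
From mathcomp Require Import multinomials.mpoly.
Set Implicit Arguments. Unset Strict Implicit. Unset Printing Implicit Defensive.
Import GRing.Theory.
Local Open Scope ring_scope.

Section Ideals.
Variables (K : fieldType) (n : nat).
Local Notation P := {mpoly K[n]}.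

Definition in_ideal (gs : seq P) (p : P) : Prop :=
  exists cs : seq P, p = \sum_(i < size gs) cs`_i * gs`_i.

Definition in_colon (gs : seq P) (u : P) (p : P) : Prop :=
  in_ideal gs (p * u).

Fixpoint pow_gens (gs : seq P) (q : nat) : seq P :=
  if q is q'.+1 then [seq g * h | g <- gs, h <- pow_gens gs q'] else [:: 1].

Definition in_ideal_pow (gs : seq P) (q : nat) (p : P) : Prop :=
  in_ideal (pow_gens gs q) p.

Definition edge_pairs (e : rel 'I_n) : seq ('I_n * 'I_n) :=
  filter (fun ij : 'I_n * 'I_n => (nat_of_ord ij.1 < nat_of_ord ij.2)%N && e ij.1 ij.2)
         [seq (i, j) | i <- enum 'I_n, j <- enum 'I_n].

Definition edge_gens (e : rel 'I_n) : seq P :=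
  map (fun ij : 'I_n * 'I_n => 'X_ij.1 * 'X_ij.2) (edge_pairs e).

Definition min_mon_gen (I : P -> Prop) (m : 'X_{1..n}) : Prop :=
  I 'X_[m] /\ forall m' : 'X_{1..n}, (m' <= m)%MM -> m' != m -> ~ I 'X_[m'].

Definition has_linear_quotients (I : P -> Prop) : Prop :=
  exists s : seq 'X_{1..n},
    [/\ uniq s,
        (forall m, m \in s <-> min_mon_gen I m) &
        forall i : nat, (0 < i < size s)%N ->
          exists S : {set 'I_n}, forall p : P,
            in_colon [seq 'X_[m] | m <- take i s] 'X_[nth 0%MM s i] p <->
            in_ideal [seq 'X_j | j <- enum S] p].

End Ideals.

Definition C5 : rel 'I_5 :=
  fun i j => (j == (i.+1 %% 5)%N :> nat) || (i == (j.+1 %% 5)%N :> nat).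

(* Main.v *)
Require Import Defs.
From HB Require Import structures.
From mathcomp Require Import all_boot all_order all_algebra.
From mathcomp Require Import multinomials.mpoly.
From mathcomp Require Import zify.
Set Implicit Arguments. Unset Strict Implicit. Unset Printing Implicit Defensive.
Import GRing.Theory.
Local Open Scope ring_scope.
Section Gen.
Variables (K : fieldType) (n : nat).
Local Notation P := {mpoly K[n]}.
Implicit Types (gs : seq P) (p : P).

Lemma in_ideal0 gs : in_ideal gs 0.
Proof. by exists [::]; rewrite big1 // => i _; rewrite nth_nil mul0r. Qed.

Lemma in_idealD gs p1 p2 : in_ideal gs p1 -> in_ideal gs p2 -> in_ideal gs (p1 + p2).
Proof.
case=> cs1 -> [cs2 ->]; exists [seq cs1`_i + cs2`_i | i <- iota 0 (size gs)].
rewrite -big_split /=; apply: eq_bigr => i _.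
by rewrite (nth_map 0%N) ?size_iota // nth_iota // add0n mulrDl.
Qed.

Lemma in_idealMl gs r p : in_ideal gs p -> in_ideal gs (r * p).
Proof.
case=> cs ->; exists [seq r * cs`_i | i <- iota 0 (size gs)].
rewrite mulr_sumr; apply: eq_bigr => i _.
by rewrite (nth_map 0%N) ?size_iota // nth_iota // add0n mulrA.
Qed.

Lemma in_ideal_nth gs j : (j < size gs)%N -> in_ideal gs gs`_j.
Proof.
move=> hj; exists [seq ((i == j)%:R : P) | i <- iota 0 (size gs)].
rewrite (bigD1 (Ordinal hj)) //= big1 ?addr0.
  by rewrite (nth_map 0%N) ?size_iota // nth_iota // add0n eqxx mul1r.
move=> i hi; rewrite (nth_map 0%N) ?size_iota // nth_iota // add0n.
rewrite (_ : (i == j :> nat) = false) ?mul0r //.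
by apply: contraNF hi => /eqP h; apply/eqP/val_inj.
Qed.

Lemma in_ideal_sum gs (r : seq 'X_{1..n}) (F : 'X_{1..n} -> P) :
  (forall m, m \in r -> in_ideal gs (F m)) -> in_ideal gs (\sum_(m <- r) F m).
Proof.
move=> h; rewrite big_seq; apply: (big_ind (in_ideal gs)) => //.
- exact: in_ideal0.
- exact: in_idealD.
Qed.

Lemma in_idealP (ms : seq 'X_{1..n}) p :
  in_ideal [seq 'X_[m] | m <- ms] p <->
  (forall m, m \in msupp p -> exists2 g, g \in ms & (g <= m)%MM).
Proof.
split.
- case=> cs -> m; rewrite size_map.
  have -> : \sum_(i < size ms) cs`_i * [seq 'X_[m] | m <- ms]`_i =
            \sum_(i < size ms) cs`_i * 'X_[nth 0%MM ms i].
    by apply: eq_bigr => i _; rewrite (nth_map 0%MM).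
  rewrite mcoeff_msupp raddf_sum /= => nz.
  have [i hi] : exists i : 'I_(size ms), (cs`_i * 'X_[nth 0%MM ms i])@_m != 0.
    apply/existsP; apply: contraR nz => /existsPn h0.
    by rewrite big1 // => i _; apply/eqP; rewrite -[_ == _]negbK h0.
  move: hi; rewrite -mcoeff_msupp.
  rewrite (perm_mem (msuppMX _ _)) => /mapP [m' _ ->].
  by exists (nth 0%MM ms i); [exact: mem_nth | exact: lem_addr].
- move=> h; rewrite (mpolyE p); apply: in_ideal_sum => m hm.
  have [g hg hle] := h m hm.
  rewrite -(submK hle) mpolyXD scalerAl.
  apply: in_idealMl.
  have hidx : (index g ms < size [seq ('X_[m0] : P) | m0 <- ms])%N by rewrite size_map index_mem.
  have := in_ideal_nth hidx.
  have hi : (index g ms < size ms)%N by rewrite index_mem.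
  by rewrite (nth_map 0%MM) // (nth_index _ hg).
Qed.

Lemma in_colonP (ms : seq 'X_{1..n}) w p :
  in_colon [seq 'X_[m] | m <- ms] 'X_[w] p <->
  (forall m, m \in msupp p -> exists2 g, g \in ms & (g <= w + m)%MM).
Proof.
rewrite /in_colon in_idealP; split => h m.
- move=> hm; apply: h; rewrite (perm_mem (msuppMX p w)); apply/mapP; by exists m.
- rewrite (perm_mem (msuppMX p w)) => /mapP [m' hm' ->]; exact: h.
Qed.

Lemma in_ideal_varsP (S : {set 'I_n}) p :
  in_ideal [seq 'X_j | j <- enum S] p <->
  (forall m, m \in msupp p -> exists2 j, j \in S & (0 < m j)%N).
Proof.
rewrite (_ : [seq 'X_j | j <- enum S] = [seq 'X_[m] | m <- [seq U_(j)%MM | j <- enum S]]);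
  last by rewrite -map_comp.
rewrite in_idealP; split=> h m /h [g].
- move=> /mapP [j hj ->] hle; exists j; first by rewrite mem_enum in hj.
  by have := mnm_lepP hle j; rewrite mnm1E eqxx.
- move=> hj hpos; exists U_(g)%MM; first by apply/map_f; rewrite mem_enum.
  by apply/mnm_lepP => i; rewrite mnm1E; case: eqP => [<-|].
Qed.

End Gen.
Definition i0 : 'I_5 := @Ordinal 5 0 isT.
Definition i1 : 'I_5 := @Ordinal 5 1 isT.
Definition i2 : 'I_5 := @Ordinal 5 2 isT.
Definition i3 : 'I_5 := @Ordinal 5 3 isT.
Definition i4 : 'I_5 := @Ordinal 5 4 isT.

Definition mkm (a0 a1 a2 a3 a4 : nat) : 'X_{1..5} :=
  [multinom (nth 0%N [:: a0; a1; a2; a3; a4] i) | i < 5].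

Lemma mkmE a0 a1 a2 a3 a4 (i : 'I_5) :
  mkm a0 a1 a2 a3 a4 i = nth 0%N [:: a0; a1; a2; a3; a4] i.
Proof. exact: mnmE. Qed.

Lemma ord5 (k : 'I_5) : k = i0 \/ k = i1 \/ k = i2 \/ k = i3 \/ k = i4.
Proof.
case: k => [[|[|[|[|[|k]]]]] hk].
- by left; apply/val_inj.
- by right; left; apply/val_inj.
- by do 2 right; left; apply/val_inj.
- by do 3 right; left; apply/val_inj.
- by do 4 right; apply/val_inj.
- by [].
Qed.

Lemma mnm5P (m1 m2 : 'X_{1..5}) :
  m1 i0 = m2 i0 -> m1 i1 = m2 i1 -> m1 i2 = m2 i2 -> m1 i3 = m2 i3 -> m1 i4 = m2 i4 ->
  m1 = m2.
Proof. by move=> *; apply/mnmP => k; case: (ord5 k) => [->|[->|[->|[->|->]]]]. Qed.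

Lemma lem5P (m1 m2 : 'X_{1..5}) :
  (m1 i0 <= m2 i0)%N -> (m1 i1 <= m2 i1)%N -> (m1 i2 <= m2 i2)%N ->
  (m1 i3 <= m2 i3)%N -> (m1 i4 <= m2 i4)%N -> (m1 <= m2)%MM.
Proof. by move=> *; apply/mnm_lepP => k; case: (ord5 k) => [->|[->|[->|[->|->]]]]. Qed.

Definition Emon : seq 'X_{1..5} :=
  [seq (U_(ij.1) + U_(ij.2))%MM | ij <- edge_pairs C5].

Definition E0 := mkm 1 1 0 0 0.
Definition E1 := mkm 0 1 1 0 0.
Definition E2 := mkm 0 0 1 1 0.
Definition E3 := mkm 0 0 0 1 1.
Definition E4 := mkm 1 0 0 0 1.

Lemma mem_edge_pairs (i j : 'I_5) :
  ((i, j) \in edge_pairs C5) = ((i < j)%N && C5 i j).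
Proof.
rewrite /edge_pairs mem_filter /=.
have -> : (i, j) \in [seq (i0, j0) | i0 <- enum 'I_5, j0 <- enum 'I_5].
  by apply: (allpairs_f (fun a b => (a, b))); rewrite mem_enum.
by rewrite andbT.
Qed.

Ltac solve_mnm := apply: mnm5P; by rewrite ?mnmDE ?mnm1E ?mkmE.

Lemma EmonP e : e \in Emon -> e = E0 \/ e = E1 \/ e = E2 \/ e = E3 \/ e = E4.
Proof.
case/mapP => [[i j]] /=; rewrite mem_edge_pairs => /andP [hlt hC] ->.
case: (ord5 i) => [->|[->|[->|[->|->]]]] in hlt hC *;
case: (ord5 j) => [->|[->|[->|[->|->]]]] in hlt hC *;
move: hlt hC; rewrite /C5 //= => _ _;
first [ left; solve_mnm | right; left; solve_mnm | do 2 right; left; solve_mnm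
      | do 3 right; left; solve_mnm | do 4 right; solve_mnm ].
Qed.

Lemma Emon_mem : [/\ E0 \in Emon, E1 \in Emon, E2 \in Emon, E3 \in Emon & E4 \in Emon].
Proof.
have h : forall (i j : 'I_5), (i < j)%N -> C5 i j -> (U_(i) + U_(j))%MM \in Emon.
  move=> i j h1 h2; apply/mapP; exists (i, j) => //.
  by rewrite mem_edge_pairs h1.
split.
- by rewrite (_ : E0 = (U_(i0) + U_(i1))%MM); [apply: h | solve_mnm].
- by rewrite (_ : E1 = (U_(i1) + U_(i2))%MM); [apply: h | solve_mnm].
- by rewrite (_ : E2 = (U_(i2) + U_(i3))%MM); [apply: h | solve_mnm].
- by rewrite (_ : E3 = (U_(i3) + U_(i4))%MM); [apply: h | solve_mnm].
- by rewrite (_ : E4 = (U_(i0) + U_(i4))%MM); [apply: h | solve_mnm].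
Qed.
Fixpoint Mq (q : nat) : seq 'X_{1..5} :=
  if q is q'.+1 then [seq (e + m)%MM | e <- Emon, m <- Mq q'] else [:: 0%MM].

Lemma edge_gensE (K : fieldType) :
  edge_gens K C5 = [seq 'X_[m] | m <- Emon].
Proof.
rewrite /edge_gens /Emon -map_comp; apply: eq_map => ij /=.
by rewrite mpolyXD.
Qed.

Lemma pow_gensE (K : fieldType) q :
  pow_gens (edge_gens K C5) q = [seq 'X_[m] | m <- Mq q].
Proof.
elim: q => [|q ih] /=; first by rewrite mpolyX0.
rewrite ih edge_gensE map_allpairs allpairs_mapl allpairs_mapr.
by apply: eq_allpairs => e m; rewrite mpolyXD.
Qed.

Definition mkc (c0 c1 c2 c3 c4 : nat) := mkm (c4+c0) (c0+c1) (c1+c2) (c2+c3) (c3+c4).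

Lemma MqP q m : m \in Mq q <->
  exists c0 c1 c2 c3 c4, (c0+c1+c2+c3+c4 = q)%N /\ m = mkc c0 c1 c2 c3 c4.
Proof.
elim: q m => [|q ih] m /=.
  split; first by rewrite inE => /eqP ->; exists 0%N, 0%N, 0%N, 0%N, 0%N; split=> //;
    apply: mnm5P; rewrite ?mnm0E ?mkmE.
  case=> [c0 [c1 [c2 [c3 [c4 [hs ->]]]]]]; rewrite inE; apply/eqP.
  by apply: mnm5P; rewrite ?mnm0E ?mkmE /=; lia.
split.
- case/allpairsP => [[e m'] /= [he hm' ->]].
  have [c0 [c1 [c2 [c3 [c4 [hs ->]]]]]] := (ih m').1 hm'.
  case: (EmonP he) => [->|[->|[->|[->|->]]]].
  + exists c0.+1, c1, c2, c3, c4; split; first lia.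
    by apply: mnm5P; rewrite ?mnmDE ?mkmE /=; lia.
  + exists c0, c1.+1, c2, c3, c4; split; first lia.
    by apply: mnm5P; rewrite ?mnmDE ?mkmE /=; lia.
  + exists c0, c1, c2.+1, c3, c4; split; first lia.
    by apply: mnm5P; rewrite ?mnmDE ?mkmE /=; lia.
  + exists c0, c1, c2, c3.+1, c4; split; first lia.
    by apply: mnm5P; rewrite ?mnmDE ?mkmE /=; lia.
  + exists c0, c1, c2, c3, c4.+1; split; first lia.
    by apply: mnm5P; rewrite ?mnmDE ?mkmE /=; lia.
- case=> [c0 [c1 [c2 [c3 [c4 [hs ->]]]]]].
  have [h0 h1 h2 h3 h4] := Emon_mem.
  have [e0|[e1|[e2|[e3|e4]]]] : (0 < c0 \/ 0 < c1 \/ 0 < c2 \/ 0 < c3 \/ 0 < c4)%N by lia.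
  + rewrite (_ : mkc _ _ _ _ _ = (E0 + mkc c0.-1 c1 c2 c3 c4)%MM); last first.
      by apply: mnm5P; rewrite ?mnmDE ?mkmE /=; lia.
    apply: allpairs_f => //; apply/ih; exists c0.-1, c1, c2, c3, c4; split=> //; lia.
  + rewrite (_ : mkc _ _ _ _ _ = (E1 + mkc c0 c1.-1 c2 c3 c4)%MM); last first.
      by apply: mnm5P; rewrite ?mnmDE ?mkmE /=; lia.
    apply: allpairs_f => //; apply/ih; exists c0, c1.-1, c2, c3, c4; split=> //; lia.
  + rewrite (_ : mkc _ _ _ _ _ = (E2 + mkc c0 c1 c2.-1 c3 c4)%MM); last first.
      by apply: mnm5P; rewrite ?mnmDE ?mkmE /=; lia.
    apply: allpairs_f => //; apply/ih; exists c0, c1, c2.-1, c3, c4; split=> //; lia.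
  + rewrite (_ : mkc _ _ _ _ _ = (E3 + mkc c0 c1 c2 c3.-1 c4)%MM); last first.
      by apply: mnm5P; rewrite ?mnmDE ?mkmE /=; lia.
    apply: allpairs_f => //; apply/ih; exists c0, c1, c2, c3.-1, c4; split=> //; lia.
  + rewrite (_ : mkc _ _ _ _ _ = (E4 + mkc c0 c1 c2 c3 c4.-1)%MM); last first.
      by apply: mnm5P; rewrite ?mnmDE ?mkmE /=; lia.
    apply: allpairs_f => //; apply/ih; exists c0, c1, c2, c3, c4.-1; split=> //; lia.
Qed.

Lemma mdeg5 (m : 'X_{1..5}) : mdeg m = (m i0 + m i1 + m i2 + m i3 + m i4)%N.
Proof.
rewrite mdegE !big_ord_recl big_ord0 addn0 !addnA.
by congr (_ + _ + _ + _ + _)%N; congr (m _); apply/val_inj.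
Qed.

Lemma Mq_deg q m : m \in Mq q -> mdeg m = (2 * q)%N.
Proof.
case/MqP=> [c0 [c1 [c2 [c3 [c4 [hs ->]]]]]].
rewrite mdeg5 /mkc !mkmE /=; lia.
Qed.
Lemma le_deg_eq n (g m : 'X_{1..n}) : (g <= m)%MM -> mdeg g = mdeg m -> g = m.
Proof.
move=> hle hd; have e := submK hle.
have h0 : mdeg (m - g)%MM = 0%N by have := congr1 mdeg e; rewrite mdegD; lia.
by move/eqP: h0; rewrite mdeg_eq0 => /eqP h; rewrite -e h add0m.
Qed.

Section MinGen.
Variable K : fieldType.

Lemma in_I_mon q m : in_ideal_pow (edge_gens K C5) q 'X_[m] <->
  exists2 g, g \in Mq q & (g <= m)%MM.
Proof.
rewrite /in_ideal_pow pow_gensE in_idealP msuppX; split => [h|[g hg hle] m'].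
  by apply: h; rewrite mem_seq1.
by rewrite mem_seq1 => /eqP ->; exists g.
Qed.

Lemma min_genP q m : min_mon_gen (in_ideal_pow (edge_gens K C5) q) m <-> m \in Mq q.
Proof.
split.
- case=> /in_I_mon [g hg hle] hmin.
  case: (eqVneq g m) => [<-//|hne].
  by exfalso; apply: (hmin g hle hne); apply/in_I_mon; exists g => //; apply: lepm_refl.
- move=> hm; split; first by apply/in_I_mon; exists m => //; apply: lepm_refl.
  move=> m' hle hne /in_I_mon [g hg hle'].
  have hgm : g = m.
    apply: le_deg_eq; first exact: lepm_trans hle' hle.
    by rewrite (Mq_deg hg) (Mq_deg hm).
  move: hle'; rewrite hgm => hle'.
  have : m' = m.
    apply/mnmP => i; apply/eqP; rewrite eqn_leq.
    by rewrite (mnm_lepP hle i) (mnm_lepP hle' i).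
  by move/eqP; rewrite (negbTE hne).
Qed.

End MinGen.
Section Core.
Local Open Scope nat_scope.
Definition phi (a1 a2 a3 a4 : nat) : nat :=
  if 2*a2 + a4 <= a1 + 2*a3 then 2*(a1 + 2*a3 - (2*a2 + a4)) else 2*(2*a2+a4 - (a1+2*a3)) - 1.

Lemma core (c0 c1 c2 c3 c4 d0 d1 d2 d3 d4 : nat) :
  2 <= c0+c1+c2+c3+c4 -> d0+d1+d2+d3+d4 = c0+c1+c2+c3+c4 ->
  ~ (d4+d0 = c4+c0 /\ d0+d1 = c0+c1 /\ d1+d2 = c1+c2 /\ d2+d3 = c2+c3 /\ d3+d4 = c3+c4) ->
  (d4+d0 < c4+c0 \/ (d4+d0 = c4+c0 /\ ((d0+d1)+(d3+d4) < (c0+c1)+(c3+c4) \/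
     ((d0+d1)+(d3+d4) = (c0+c1)+(c3+c4) /\ phi (d0+d1) (d1+d2) (d2+d3) (d3+d4) <= phi (c0+c1) (c1+c2) (c2+c3) (c3+c4))))) ->
  (1 <= c2 /\ 1 <= c4 /\ c0+c1 < d0+d1) \/
  (1 <= c4 /\ (c0+c1) + 2*(c2+c3) + 2 <= 2*(c1+c2) + (c3+c4) /\ c0+c1 < d0+d1) \/
  (1 <= c0 /\ c1+c2 < d1+d2) \/
  (1 <= c3 /\ c1+c2 < d1+d2) \/
  (1 <= c1 /\ c2+c3 < d2+d3) \/
  (1 <= c4 /\ c2+c3 < d2+d3) \/
  (1 <= c0 /\ 1 <= c2 /\ c3+c4 < d3+d4) \/
  (1 <= c0 /\ 2*(c1+c2) + (c3+c4) + 1 <= (c0+c1) + 2*(c2+c3) /\ c3+c4 < d3+d4).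
Proof.
move=> Hq Hs Hne [HA|[H0 [HB|[HC Hphi]]]].
-
  have [A1|A2] : d0 < c0 \/ d4 < c4 by lia.
  + have [h2|h2] : c1+c2 < d1+d2 \/ d1+d2 <= c1+c2 by lia.
      by right; right; left; lia.
    have h4 : c3+c4 < d3+d4 by lia.
    have [e2|e2] : 1 <= c2 \/ c2 = 0 by lia.
      by do 6 right; left; lia.
    have h3 : c2+c3 < d2+d3 by lia.
    have [e1|e1] : 1 <= c1 \/ c1 = 0 by lia.
      by do 4 right; left; lia.
    have [e4|e4] : 1 <= c4 \/ c4 = 0 by lia.
      by do 5 right; left; lia.
    by do 7 right; lia.
  + have [h3|h3] : c2+c3 < d2+d3 \/ d2+d3 <= c2+c3 by lia.
      by do 5 right; left; lia.
    have h1 : c0+c1 < d0+d1 by lia.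
    have [e2|e2] : 1 <= c2 \/ c2 = 0 by lia.
      by left; lia.
    have h2 : c1+c2 < d1+d2 by lia.
    have [e0|e0] : 1 <= c0 \/ c0 = 0 by lia.
      by right; right; left; lia.
    have [e3|e3] : 1 <= c3 \/ c3 = 0 by lia.
      by do 3 right; left; lia.
    by right; left; lia.
-
  have [h2|h3] : c1+c2 < d1+d2 \/ c2+c3 < d2+d3 by lia.
  + have [e0|e0] : 1 <= c0 \/ c0 = 0 by lia.
      by right; right; left; lia.
    have [e3|e3] : 1 <= c3 \/ c3 = 0 by lia.
      by do 3 right; left; lia.
    lia.
  + have [e1|e1] : 1 <= c1 \/ c1 = 0 by lia.
      by do 4 right; left; lia.
    have [e4|e4] : 1 <= c4 \/ c4 = 0 by lia.
      by do 5 right; left; lia.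
    lia.
-
  have e2 : d2 = c2 by lia.
  have [h2|[h3|hb]] : c1+c2 < d1+d2 \/ c2+c3 < d2+d3 \/ d1 = c1 by lia.
  + by do 3 right; left; lia.
  + by do 4 right; left; lia.
  have [h1|[h4|ha]] : c0+c1 < d0+d1 \/ c3+c4 < d3+d4 \/ d0 = c0 by lia.
  + have [f2|f2] : 1 <= c2 \/ c2 = 0 by lia.
      by left; lia.
    have [z|z] : (c0+c1) + 2*(c2+c3) + 2 <= 2*(c1+c2) + (c3+c4) \/
                 2*(c1+c2) + (c3+c4) < (c0+c1) + 2*(c2+c3) + 2 by lia.
      by right; left; lia.
    exfalso; move: Hphi; rewrite /phi; case: ifP => ?; case: ifP => ?; lia.
  + have [f2|f2] : 1 <= c2 \/ c2 = 0 by lia.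
      by do 6 right; left; lia.
    have [z|z] : 2*(c1+c2) + (c3+c4) + 1 <= (c0+c1) + 2*(c2+c3) \/
                 (c0+c1) + 2*(c2+c3) <= 2*(c1+c2) + (c3+c4) by lia.
      by do 7 right; lia.
    exfalso; move: Hphi; rewrite /phi; case: ifP => ?; case: ifP => ?; lia.
  + exfalso; apply: Hne; lia.
Qed.
End Core.

Definition keyle (m1 m2 : 'X_{1..5}) : bool :=
  (m1 i0 < m2 i0)%N || ((m1 i0 == m2 i0) && ((m1 i1 + m1 i4 < m2 i1 + m2 i4)%N ||
    ((m1 i1 + m1 i4 == m2 i1 + m2 i4) &&
     (phi (m1 i1) (m1 i2) (m1 i3) (m1 i4) <= phi (m2 i1) (m2 i2) (m2 i3) (m2 i4))%N))).

Lemma keyle_trans : transitive keyle.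
Proof.
move=> y x z; rewrite /keyle.
move: (phi (x i1) _ _ _) (phi (y i1) _ _ _) (phi (z i1) _ _ _) => px py pz.
lia.
Qed.

Lemma keyle_total : total keyle.
Proof.
move=> x y; rewrite /keyle.
move: (phi (x i1) _ _ _) (phi (y i1) _ _ _) => px py.
lia.
Qed.

Lemma keyle_refl : reflexive keyle.
Proof. by move=> x; rewrite /keyle !eqxx leqnn !orbT. Qed.

Lemma U0E : U_(i0)%MM = mkm 1 0 0 0 0. Proof. by solve_mnm. Qed.
Lemma U1E : U_(i1)%MM = mkm 0 1 0 0 0. Proof. by solve_mnm. Qed.
Lemma U2E : U_(i2)%MM = mkm 0 0 1 0 0. Proof. by solve_mnm. Qed.
Lemma U3E : U_(i3)%MM = mkm 0 0 0 1 0. Proof. by solve_mnm. Qed.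
Lemma U4E : U_(i4)%MM = mkm 0 0 0 0 1. Proof. by solve_mnm. Qed.

Ltac fin_move :=
  split; [ apply/MqP; eexists _, _, _, _, _; split; [|reflexivity]; lia
         | rewrite /keyle /mkc !mkmE /=; rewrite /phi; repeat case: ifP => ?; lia
         | rewrite /keyle /mkc !mkmE /=; rewrite /phi; repeat case: ifP => ?; lia
         | apply: lem5P; rewrite ?U0E ?U1E ?U2E ?U3E ?U4E !mnmDE /mkc !mkmE /=; lia
         | rewrite /mkc !mkmE /=; lia ].

Lemma move_lemma q (w g : 'X_{1..5}) : (2 <= q)%N -> w \in Mq q -> g \in Mq q ->
  g != w -> keyle g w ->
  exists k : 'I_5, exists a : 'X_{1..5},
    [/\ a \in Mq q, keyle a w, ~~ keyle w a, (a <= w + U_(k))%MM & (w k < g k)%N].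
Proof.
move=> hq /MqP [c0 [c1 [c2 [c3 [c4 [hc ->]]]]]] /MqP [d0 [d1 [d2 [d3 [d4 [hd ->]]]]]] hne hle.
have H := @core c0 c1 c2 c3 c4 d0 d1 d2 d3 d4.
move: H => /(_ ltac:(lia) ltac:(lia)) H.
move: H => /(_ ltac:(move=> [e0 [e1 [e2 [e3 e4]]]]; move: hne;
                      rewrite /mkc e0 e1 e2 e3 e4 eqxx //)
             ltac:(move: hle; rewrite /keyle /mkc !mkmE /=; lia)).
case=> [H|[H|[H|[H|[H|[H|[H|H]]]]]]].
- exists i1, (mkc c0 c1.+1 c2.-1 c3.+1 c4.-1); fin_move.
- exists i1, (mkc c0.+1 c1 c2 c3 c4.-1); fin_move.
- exists i2, (mkc c0.-1 c1.+1 c2 c3 c4); fin_move.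
- exists i2, (mkc c0 c1 c2.+1 c3.-1 c4); fin_move.
- exists i3, (mkc c0 c1.-1 c2.+1 c3 c4); fin_move.
- exists i3, (mkc c0 c1 c2 c3.+1 c4.-1); fin_move.
- exists i4, (mkc c0.-1 c1.+1 c2.-1 c3.+1 c4); fin_move.
- exists i4, (mkc c0.-1 c1 c2 c3 c4.+1); fin_move.
Qed.

Theorem proposition4p2 (K : fieldType) (q : nat) :
  (2 <= q)%N ->
  has_linear_quotients (in_ideal_pow (edge_gens K C5) q).
Proof.
move=> hq.
pose s := sort keyle (undup (Mq q)).
have s_uniq : uniq s by rewrite sort_uniq undup_uniq.
have s_mem : forall m, (m \in s) = (m \in Mq q) by move=> m; rewrite mem_sort mem_undup.
have s_sorted : sorted keyle s by apply: sort_sorted; exact: keyle_total.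
exists s; split => //.
  by move=> m; rewrite s_mem; split => /min_genP.
move=> i /andP [i_pos i_lt].
pose w := nth 0%MM s i.
exists [set k : 'I_5 | has (fun g => (g <= w + U_(k))%MM) (take i s)].
move=> p; rewrite in_colonP in_ideal_varsP.
suff H : forall m : 'X_{1..5},
    (exists2 g, g \in take i s & (g <= w + m)%MM) <->
    (exists2 j, j \in [set k : 'I_5 | has (fun g => (g <= w + U_(k))%MM) (take i s)] & (0 < m j)%N).
  by split => h m hm; apply/H/h.
have size_ti : size (take i s) = i by rewrite size_take i_lt.
move=> m; split.
- case=> g hg hle.
  pose j := index g (take i s).
  have hj : (j < i)%N by rewrite -size_ti index_mem.
  have gE : g = nth 0%MM s j by rewrite -(nth_take _ hj) nth_index.
  have hjs : (j < size s)%N by apply: ltn_trans hj i_lt.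
  have hgw : keyle g w.
    by rewrite gE; apply: (sorted_ltn_nth keyle_trans) => //; rewrite inE.
  have gne : g != w by rewrite gE /w nth_uniq //; apply/eqP => e; move: hj; rewrite e ltnn.
  have gM : g \in Mq q by rewrite -s_mem gE mem_nth.
  have wM : w \in Mq q by rewrite -s_mem mem_nth.
  have [k [a [aM hle1 hle2 hak hk]]] := move_lemma hq wM gM gne hgw.
  exists k.
    rewrite inE; apply/hasP; exists a => //.
    have aS : a \in s by rewrite s_mem.
    pose j' := index a s.
    have hj's : (j' < size s)%N by rewrite index_mem.
    have aE : a = nth 0%MM s j' by rewrite nth_index.
    case: (ltnP j' i) => h.
      by rewrite aE -(nth_take _ h); apply: mem_nth; rewrite size_ti.
    exfalso; move: hle2; rewrite aE /w.
    case: (ltngtP i j') h => // [h' _|<- _]; last by rewrite keyle_refl.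
    by rewrite (sorted_ltn_nth keyle_trans) // inE.
  have := mnm_lepP hle k; rewrite mnmDE; lia.
- case=> j; rewrite inE => /hasP [g hg hle] hm.
  exists g => //; apply/mnm_lepP => k.
  have := mnm_lepP hle k; rewrite !mnmDE mnm1E; case: eqP => [<-|_]; lia.
Qed.
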